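(* Let $\mathcal Y=(\Gamma,T)$ be a coherent configuration, $m\ge1$, $\Delta=\{1,\dots,m\}$, $L\le\mathrm{Sym}(\Delta)$, and $\mathcal X=\mathcal Y\uparrow L=(\Omega,S)$ with $\Omega=\Gamma^m$. For $\alpha,\beta\in\Omega$ let $d(\alpha,\beta)$ be the number of $i\in\Delta$ with $\alpha_i\neq\beta_i$, let $r_i=\{(\alpha,\beta):d(\alpha,\beta)=i\}$ for $0\le i\le m$, $r_{-1}=\emptyset$ and $r=r_1$. Fix $\gamma_0\in\Gamma$, let $\alpha\in\Omega$ be the point with all coordinates $\gamma_0$, and for $i\in\Delta$ let $\Gamma_i=\{\beta\in\Omega:d(\alpha,\beta)=1,\ \beta_i\ne\gamma_0\}$, so that $\alpha r=\{\beta:(\alpha,\beta)\in r\}$ is the disjoint union of the $\Gamma_i$. Then the map $\rho:\Omega\to2^{\alpha r}$, $\beta\mapsto\beta r_{d-1}\cap\alpha r$ where $d=d(\alpha,\beta)$ (and $\beta r_{d-1}=\{\delta:(\beta,\delta)\in r_{d-1}\}$), is injective and its image is $\{\Lambda\subseteq\alpha r: |\Lambda\cap\Gamma_i|\le 1\text{ for all }i\in\Delta\}$. In particular, the set $\alpha r$ is a base of the coherent configuration $\mathcal X_\alpha$.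
   Context: A coherent configuration on a finite set $\Omega$ is $(\Omega,S)$ with $S$ a partition of $\Omega\times\Omega$ such that $1_\Omega$ is a union of elements of $S$, $s^*=\{(\beta,\alpha):(\alpha,\beta)\in s\}\in S$, and for $r,s,t\in S$ the number $|\{\gamma:(\alpha,\gamma)\in r,(\gamma,\beta)\in s\}|$ is independent of $(\alpha,\beta)\in t$; fibers are sets $\Gamma$ with $1_\Gamma\in S$. Exponentiation: for $t_1,\dots,t_m\in T$ put $t_1\otimes\dots\otimes t_m=\{(\alpha,\beta)\in\Gamma^m\times\Gamma^m:(\alpha_i,\beta_i)\in t_i\ \forall i\}$; $L$ acts on $\Gamma^m$ by permuting coordinates and hence on such relations; $\mathcal Y\uparrow L=(\Gamma^m,\{\bigcup_{l\in L}t^l:t=t_1\otimes\dots\otimes t_m,\ t_i\in T\})$, a coherent configuration. A fission of $\mathcal X$ is a coherent configuration on $\Omega$ whose relations (unions of basic relations) include those of $\mathcal X$; complete: all basic relations singletons. $\mathcal X_\alpha$ is the smallest fission of $\mathcal X$ in which $\{\alpha\}$ is a fiber. A set $B$ is a base of a coherent configuration $\mathcal Z$ if the smallest fission of $\mathcal Z$ in which every $\{\beta\}$, $\beta\in B$, is a fiber is complete. *)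

(* Defs.v *)
From mathcomp Require Import all_boot all_order all_algebra all_fingroup.
Set Implicit Arguments. Unset Strict Implicit. Unset Printing Implicit Defensive.

Section CC.
Variable Om : finType.

Definition diagR : {set Om * Om} := [set p | p.1 == p.2].

Definition transR (s : {set Om * Om}) : {set Om * Om} :=
  [set p | (p.2, p.1) \in s].

Definition is_cc (S : {set {set Om * Om}}) : Prop :=
  [/\ partition S [set: Om * Om],
      exists2 P : {set {set Om * Om}}, P \subset S & cover P = diagR,
      forall s, s \in S -> transR s \in S &
      forall r s t, r \in S -> s \in S -> t \in S ->
        forall a b a' b', (a, b) \in t -> (a', b') \in t ->
          #|[set g | ((a, g) \in r) && ((g, b) \in s)]| =
          #|[set g | ((a', g) \in r) && ((g, b') \in s)]| ].

Definition fission (S' S : {set {set Om * Om}}) : Prop :=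
  is_cc S' /\
  forall s, s \in S -> exists2 P : {set {set Om * Om}}, P \subset S' & cover P = s.

Definition complete (S : {set {set Om * Om}}) : Prop :=
  forall s, s \in S -> #|s| = 1%N.

Definition points_fibers (B : {set Om}) (S : {set {set Om * Om}}) : Prop :=
  forall b, b \in B -> [set (b, b)] \in S.

Definition smallest_pt_fission (Z : {set {set Om * Om}}) (B : {set Om})
    (F : {set {set Om * Om}}) : Prop :=
  [/\ fission F Z, points_fibers B F &
      forall F', fission F' Z -> points_fibers B F' -> fission F' F].

Definition is_base (Z : {set {set Om * Om}}) (B : {set Om}) : Prop :=
  forall F, smallest_pt_fission Z B F -> complete F.
End CC.

Section Exp.
Variables (G : finType) (m : nat).
Notation Om := {ffun 'I_m -> G}.

Definition perm_pt (l : {perm 'I_m}) (x : Om) : Om := [ffun i => x (l i)].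

Definition tensorR (t : {ffun 'I_m -> {set G * G}}) : {set Om * Om} :=
  [set p : Om * Om | [forall i, (p.1 i, p.2 i) \in t i]].

Definition upRel (L : {set {perm 'I_m}}) (t : {ffun 'I_m -> {set G * G}})
  : {set Om * Om} :=
  [set p : Om * Om | [exists l in L, (perm_pt l p.1, perm_pt l p.2) \in tensorR t]].

Definition upS (T : {set {set G * G}}) (L : {set {perm 'I_m}})
  : {set {set Om * Om}} :=
  [set upRel L t | t in [set t : {ffun 'I_m -> {set G * G}} | [forall i, t i \in T]]].

Definition dist (a b : Om) : nat := #|[set i | a i != b i]|.

(* r_i, for i an integer (r_{-1} is empty automatically) *)
Definition rR (i : int) : {set Om * Om} := [set p : Om * Om | ((dist p.1 p.2)%:Z == i)%R].

Definition nbh (i : int) (b : Om) : {set Om} := [set d | (b, d) \in rR i].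

Definition constpt (g0 : G) : Om := [ffun=> g0].

Definition GammaI (g0 : G) (i : 'I_m) : {set Om} :=
  [set b | (dist (constpt g0) b == 1%N) && (b i != g0)].

Definition rho (g0 : G) (b : Om) : {set Om} :=
  nbh ((dist (constpt g0) b)%:Z - 1)%R b :&: nbh 1%R (constpt g0).
End Exp.
Arguments constpt {G m} g0.

(* Main.v *)
Require Import Defs.
From mathcomp Require Import all_boot all_order all_algebra all_fingroup.
From mathcomp Require Import zify.
Set Implicit Arguments. Unset Strict Implicit. Unset Printing Implicit Defensive.

Section Gen.
Variable Om : finType.
Implicit Types (S : {set {set Om * Om}}).

Lemma cc_part S : is_cc S -> partition S [set: Om * Om].
Proof. by case. Qed.

Lemma cc_cls S p : is_cc S -> pblock S p \in S /\ p \in pblock S p.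
Proof.
move=> /cc_part /and3P [/eqP cS _ _].
have pc : p \in cover S by rewrite cS inE.
by rewrite pblock_mem // mem_pblock.
Qed.

Lemma cc_uniq S s p : is_cc S -> s \in S -> p \in s -> pblock S p = s.
Proof. by move=> /cc_part /and3P [_ tS _]; apply: def_pblock. Qed.

Lemma cc_nonempty S s : is_cc S -> s \in S -> exists p, p \in s.
Proof.
move=> /cc_part /and3P [_ _ n0] sS.
case: (set_0Vmem s) => [s0|[p ps]]; last by exists p.
by move: n0; rewrite -s0 sS.
Qed.

Lemma cc_ic S r s t a b a' b' : is_cc S -> r \in S -> s \in S -> t \in S ->
  (a, b) \in t -> (a', b') \in t ->
  #|[set g | ((a, g) \in r) && ((g, b) \in s)]| =
  #|[set g | ((a', g) \in r) && ((g, b') \in s)]|.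
Proof. by case=> _ _ _ H rS sS tS abt abt2; apply: (H r s t rS sS tS a b a' b'). Qed.

Lemma snd_forced S u e x a a' : is_cc S -> [set (e, e)] \in S -> u \in S ->
  (x, e) \in u -> (a, a') \in u -> a' = e.
Proof.
move=> cc fe uS xu au.
have := cc_ic cc uS fe uS xu au.
rewrite (_ : [set g | _ & _] = [set e]); last first.
  apply/setP=> g; rewrite !inE xpair_eqE eqxx andbT.
  by case: eqP => [->|_]; rewrite ?xu ?andbF.
rewrite cards1 => H; have : 0 < #|[set g | (a, g) \in u & (g, a') \in [set (e, e)]]| by rewrite -H.
by case/card_gt0P => g; rewrite !inE => /andP [_ /eqP [_ ->]].
Qed.

Lemma fst_forced S u e x a a' : is_cc S -> [set (e, e)] \in S -> u \in S ->
  (e, x) \in u -> (a, a') \in u -> a = e.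
Proof.
move=> cc fe uS xu au.
have := cc_ic cc fe uS uS xu au.
rewrite (_ : [set g | _ & _] = [set e]); last first.
  apply/setP=> g; rewrite !inE xpair_eqE eqxx /=.
  by case: eqP => [->|_]; rewrite ?xu ?andbF.
rewrite cards1 => H; have : 0 < #|[set g | (a, g) \in [set (e, e)] & (g, a') \in u]| by rewrite -H.
by case/card_gt0P => g; rewrite !inE => /andP [/eqP [-> _] _].
Qed.

Lemma ex_lemma S t u b c c' e : is_cc S -> t \in S -> u \in S ->
  (b, b) \in t -> (c, c') \in t -> (b, e) \in u -> exists g, (c, g) \in u.
Proof.
move=> cc tS uS bt ct bu.
have [sS es] := cc_cls (e, b) cc.
have := cc_ic cc uS sS tS bt ct.
have : 0 < #|[set g | ((b, g) \in u) && ((g, b) \in pblock S (e, b))]|.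
  by apply/card_gt0P; exists e; rewrite inE bu es.
move=> H1 H2; move: H1; rewrite H2 => /card_gt0P [g]; rewrite inE => /andP [cg _].
by exists g.
Qed.

Lemma cc_diag S b p : is_cc S -> p \in pblock S (b, b) -> p.1 = p.2.
Proof.
move=> cc; case: (cc) => _ [P PS cP] _ _.
have : (b, b) \in cover P by rewrite cP inE.
case/bigcupP => q qP bq.
rewrite (cc_uniq cc (subsetP PS _ qP) bq) => pq.
have : p \in cover P by apply/bigcupP; exists q.
by rewrite cP inE => /eqP.
Qed.

Lemma fission_fiber S' S e : is_cc S -> fission S' S -> [set (e, e)] \in S -> [set (e, e)] \in S'.
Proof.
move=> ccS [ccS' H] fe; case: (H _ fe) => P PS cP.
have : (e, e) \in cover P by rewrite cP inE.
case/bigcupP => q qP eq.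
have -> : [set (e, e)] = q; last by apply: (subsetP PS).
apply/eqP; rewrite eqEsubset sub1set eq /= -cP.
by apply/subsetP => p pq; apply/bigcupP; exists q.
Qed.

Lemma fission_refine S' S f p : is_cc S -> fission S' S -> f \in S' -> p \in f ->
  f \subset pblock S p.
Proof.
move=> ccS [ccS' H] fS pf.
have [sS ps] := cc_cls p ccS.
case: (H _ sS) => P PS cP.
have : p \in cover P by rewrite cP.
case/bigcupP => q qP pq.
have qf : q = f by rewrite -(cc_uniq ccS' (subsetP PS _ qP) pq) (cc_uniq ccS' fS pf).
by rewrite -cP -qf; apply: bigcup_sup.
Qed.
End Gen.
Lemma int_pred (n k : nat) : ((n%:Z == k%:Z - 1)%R) = (n.+1 == k).
Proof. apply/eqP/eqP => h; lia. Qed.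

Section Spec.
Variables (G : finType) (m : nat) (g0 : G).
Notation Om := {ffun 'I_m -> G}.
Notation al := (constpt g0 : Om).
Implicit Types (b c d : Om).

Definition supp (b : Om) := [set i | b i != g0].

Lemma dist_al b : dist al b = #|supp b|.
Proof. by rewrite /dist; apply: eq_card => i; rewrite !inE ffunE eq_sym. Qed.

Lemma distC (a b : Om) : dist a b = dist b a.
Proof. by rewrite /dist; apply: eq_card => i; rewrite !inE eq_sym. Qed.

Lemma in_nbh i b d : (d \in nbh i b) = ((dist b d)%:Z == i)%R.
Proof. by rewrite /nbh /rR !inE. Qed.

Lemma in_nbh1 d : (d \in nbh 1%R al) = (dist al d == 1%N).
Proof. by rewrite in_nbh. Qed.

Definition ej (j : 'I_m) (x : G) : Om := [ffun i => if i == j then x else g0].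

Lemma supp_ej j x : x != g0 -> supp (ej j x) = [set j].
Proof.
by move=> xg; apply/setP => i; rewrite !inE ffunE; case: (i == j); rewrite ?eqxx.
Qed.

Lemma dist_al_ej j x : x != g0 -> dist al (ej j x) = 1%N.
Proof. by move=> xg; rewrite dist_al supp_ej // cards1. Qed.

Lemma al_ej d j : dist al d = 1%N -> d j != g0 -> d = ej j (d j).
Proof.
rewrite dist_al => /eqP/cards1P [k sk] dj.
have jk : j = k by apply/set1P; rewrite -sk inE.
apply/ffunP => i; rewrite ffunE; case: eqP => [->//|ij].
apply/eqP; apply: contraT => di.
have : i \in supp d by rewrite inE.
by rewrite sk => /set1P; rewrite -jk.
Qed.

Lemma rhoE b j x : x != g0 -> (ej j x \in rho g0 b) = (b j == x).
Proof.
move=> xg; rewrite /rho inE !in_nbh dist_al_ej // eqxx andbT dist_al int_pred.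
case: (eqVneq (b j) x) => bj; rewrite ?eqxx ?(negbTE bj).
- have jb : j \in supp b by rewrite inE bj.
  rewrite (cardsD1 j (supp b)) jb add1n eqSS; apply/eqP; rewrite /dist.
  apply: eq_card => i; rewrite !inE ffunE.
  by case: (eqVneq i j) => [->|ij]; rewrite ?bj ?eqxx.
- apply/eqP => h.
  have : #|supp b| <= dist b (ej j x); last by rewrite -h ltnn.
  apply/subset_leq_card/subsetP => i; rewrite !inE ffunE.
  by case: (eqVneq i j) => [->|ij] //; rewrite eq_sym.
Qed.

Lemma rho_sub b : rho g0 b \subset nbh 1%R al.
Proof. exact: subsetIr. Qed.

Lemma rho_inj : injective (@rho G m g0).
Proof.
have H b c j : rho g0 b = rho g0 c -> b j != g0 -> c j = b j.
  by move=> e bj; apply/eqP; rewrite -rhoE // -e rhoE.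
move=> b c e; apply/ffunP => j.
case: (eqVneq (b j) g0) => bj; last by rewrite (H b c j e bj).
case: (eqVneq (c j) g0) => cj; last by rewrite (H c b j (esym e) cj).
by rewrite bj cj.
Qed.

Lemma nbh1_ej d : dist al d = 1%N -> exists j, d j != g0 /\ d = ej j (d j).
Proof.
move=> h; have := h; rewrite dist_al => /eqP/cards1P [j sj].
have : j \in supp d by rewrite sj inE.
rewrite inE => dj.
by exists j; split => //; apply: al_ej.
Qed.

Lemma rho_ej b d i : d \in rho g0 b -> dist al d = 1%N -> d i != g0 -> d = ej i (b i).
Proof.
move=> dr h di; have e := al_ej h di.
by move: dr; rewrite e rhoE // => /eqP ->.
Qed.

Lemma rho_img : [set rho g0 b | b : Om] =
        [set Lam : {set Om} |
           (Lam \subset nbh 1%R al) &&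
           [forall i : 'I_m, #|Lam :&: GammaI g0 i| <= 1]].
Proof.
apply/setP => Lam; rewrite inE; apply/imsetP/andP.
  case=> b _ ->; split; first exact: rho_sub.
  apply/forallP => i; apply/card_le1_eqP => d d'.
  case/setIP => dr; rewrite inE => /andP [/eqP h di].
  case/setIP => dr'; rewrite inE => /andP [/eqP h' di'].
  by rewrite (rho_ej dr h di) (rho_ej dr' h' di').
case=> sub /forallP H.
pose b : Om := [ffun i => if [pick d in Lam :&: GammaI g0 i] is Some d then d i else g0].
exists b => //; apply/setP => d; apply/idP/idP.
  move=> dL; have := subsetP sub _ dL; rewrite in_nbh1 => /eqP h.
  case: (nbh1_ej h) => j [dj e]; rewrite e rhoE // /b ffunE.
  case: pickP => [d' d'in|none]; last by have := none d; rewrite !inE dL h eqxx dj.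
  have din : d \in Lam :&: GammaI g0 j by rewrite !inE dL h eqxx dj.
  by rewrite (card_le1_eqP (H j) _ _ d'in din).
move=> dr; have := subsetP (rho_sub b) _ dr; rewrite in_nbh1 => /eqP h.
case: (nbh1_ej h) => j [dj e]; move: dr; rewrite e rhoE // /b ffunE.
case: pickP => [d' d'in|none]; last by rewrite eq_sym (negbTE dj).
move=> /eqP d'j; move: d'in; rewrite !inE => /andP [d'L /andP [/eqP h' d'j0]].
by rewrite -d'j -(al_ej h' d'j0).
Qed.
End Spec.

Section Up.
Variables (G : finType) (m : nat) (T : {set {set G * G}}) (L : {group {perm 'I_m}}) (g0 : G).
Notation Om := {ffun 'I_m -> G}.
Notation al := (constpt g0 : Om).
Hypothesis ccT : is_cc T.

Lemma T_diag t (q : G * G) : t \in T -> q \in t -> (q.1 == q.2) = (t \subset diagR G).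
Proof.
move=> tT qt; apply/idP/idP => [e|/subsetP /(_ _ qt)]; last by rewrite inE.
case: (ccT) => _ [P PS cP] _ _.
have : q \in cover P by rewrite cP inE.
case/bigcupP => q' q'P qq'.
rewrite -(cc_uniq ccT tT qt) (cc_uniq ccT (subsetP PS _ q'P) qq') -cP.
exact: bigcup_sup.
Qed.

Lemma upRel_dist (t : {ffun 'I_m -> {set G * G}}) (p : Om * Om) : (forall i, t i \in T) -> p \in upRel L t ->
  dist p.1 p.2 = #|[set i | ~~ (t i \subset diagR G)]|.
Proof.
move=> tT; rewrite inE => /existsP [l /andP [_]]; rewrite inE => /forallP H.
rewrite /dist -(card_preimset _ (@perm_inj _ l)); apply: eq_card => i.
rewrite !inE -(T_diag (tT i) (H i)) /perm_pt !ffunE.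
by [].
Qed.

Lemma upS_dist s (p q : Om * Om) : s \in upS T L -> p \in s -> q \in s ->
  dist p.1 p.2 = dist q.1 q.2.
Proof.
case/imsetP => t; rewrite inE => /forallP tT -> ps qs.
by rewrite (upRel_dist tT ps) (upRel_dist tT qs).
Qed.

Lemma upS_cover (p : Om * Om) : exists2 s, s \in upS T L & p \in s.
Proof.
pose t := [ffun i => pblock T (p.1 i, p.2 i)].
exists (upRel L t).
  by apply: imset_f; rewrite inE; apply/forallP => i; rewrite ffunE; case: (cc_cls (p.1 i, p.2 i) ccT).
rewrite inE; apply/existsP; exists 1%g; rewrite group1 /= inE; apply/forallP => i.
by rewrite /perm_pt !ffunE perm1; case: (cc_cls (p.1 i, p.2 i) ccT).
Qed.

Lemma F_dist Xa F f (p q : Om * Om) : fission Xa (upS T L) -> fission F Xa ->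
  f \in F -> p \in f -> q \in f -> dist p.1 p.2 = dist q.1 q.2.
Proof.
move=> fX fF fin pf qf.
have ccX := fX.1.
have sub := fission_refine ccX fF fin pf.
case: (upS_cover p) => s sS ps.
case: (fX.2 _ sS) => P PS cP.
have : p \in cover P by rewrite cP.
case/bigcupP => w wP pw.
have wsub : w \subset s by rewrite -cP; apply: bigcup_sup.
rewrite (cc_uniq ccX (subsetP PS _ wP) pw) in sub.
apply: (upS_dist sS ps); apply: (subsetP wsub); exact: (subsetP sub).
Qed.

Lemma all_fibers F : is_cc F ->
  (forall f (p q : Om * Om), f \in F -> p \in f -> q \in f -> dist p.1 p.2 = dist q.1 q.2) ->
  [set (al, al)] \in F -> (forall d, d \in nbh 1%R al -> [set (d, d)] \in F) ->
  forall b : Om, [set (b, b)] \in F.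
Proof.
move=> cc Hd fa fd b.
have [sF bs] := cc_cls (b, b) cc.
set s := pblock F (b, b) in sF bs *.
have claim : forall c c', (c, c') \in s -> c = b /\ c' = b.
  move=> c c' cs; have ce : c = c' by exact: (cc_diag cc cs).
  subst c'.
  have h1 : dist al c = dist al b.
    have [uF bu] := cc_cls (b, al) cc.
    case: (ex_lemma cc sF uF bs cs bu) => g cg.
    have ga := snd_forced cc fa uF bu cg; subst g.
    by rewrite distC (Hd _ _ _ uF cg bu) distC.
  have h2 : forall j, b j != g0 -> c j = b j.
    move=> j bj; set d := ej g0 j (b j).
    have dn : d \in nbh 1%R al by rewrite in_nbh1 dist_al_ej.
    have [uF bu] := cc_cls (b, d) cc.
    case: (ex_lemma cc sF uF bs cs bu) => g cg.
    have gd := snd_forced cc (fd _ dn) uF bu cg; subst g.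
    have : d \in rho g0 b by rewrite rhoE.
    have e := Hd _ _ _ uF cg bu; rewrite /= in e. rewrite /rho !inE -h1 -e => H.
    have : d \in rho g0 c by rewrite /rho !inE /=.
    by rewrite rhoE // => /eqP.
  have ss : supp g0 b = supp g0 c.
    apply/eqP; rewrite eqEcard -!dist_al h1 leqnn andbT.
    by apply/subsetP => j; rewrite !inE => bj; rewrite h2.
  suff cb : c = b by []. apply/ffunP => j.
  case: (eqVneq (b j) g0) => bj; last by rewrite h2.
  have : j \notin supp g0 c by rewrite -ss inE bj eqxx.
  by rewrite inE negbK bj => /eqP.
have e : [set (b, b)] = s; last by rewrite e.
apply/setP => [[c c']]; rewrite inE; apply/eqP/idP => [[-> ->]|/claim [-> ->]] //.
Qed.

Lemma complete_of F : is_cc F -> (forall b : Om, [set (b, b)] \in F) -> complete F.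
Proof.
move=> cc fb s sF.
case: (cc_nonempty cc sF) => [[x y] xy].
suff -> : s = [set (x, y)] by rewrite cards1.
apply/setP => [[a a']]; rewrite inE; apply/idP/eqP => [ps|[-> ->]] //.
by rewrite (fst_forced cc (fb x) sF xy ps) (snd_forced cc (fb y) sF xy ps).
Qed.
End Up.

Theorem lemma7p2 (G : finType) (m : nat) (T : {set {set G * G}})
    (L : {group {perm 'I_m}}) (g0 : G) :
  is_cc T -> (1 <= m)%N ->
  [/\ injective (@rho G m g0),
      [set rho g0 b | b : {ffun 'I_m -> G}] =
        [set Lam : {set {ffun 'I_m -> G}} |
           (Lam \subset nbh 1%R (constpt g0)) &&
           [forall i : 'I_m, #|Lam :&: GammaI g0 i| <= 1]]
    & forall Xa, smallest_pt_fission (upS T L) [set constpt g0] Xa ->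
        is_base Xa (nbh 1%R (constpt g0))].
Proof.
move=> ccT _; split; [exact: rho_inj | exact: rho_img |].
move=> Xa [fX ptX _] F [fF ptF _].
have ccX := fX.1; have ccF := fF.1.
apply: complete_of => //.
apply: (all_fibers (g0:=g0) ccF).
- by move=> f p q; apply: (F_dist ccT fX fF).
- by apply: (fission_fiber ccX fF); apply: ptX; rewrite inE.
- exact: ptF.
Qed.
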